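(* Let $k>0$, $\mu>0$ and define, for a second-rank tensor $\mathbf A$ on $\mathbb{R}^3$ with $\det\mathbf A>0$, $$\rho_{\mathrm R}\psi_{\mathrm{el}}(\mathbf A):=\frac{k}{2}\Big(\ln\sqrt{\det\mathbf A}\Big)^2+\frac{\mu}{2}\Big(\operatorname{tr}\big((\det\mathbf A)^{-1/3}\mathbf A\big)-3\Big).$$ Let $M$ be the set of symmetric positive definite second-rank tensors $\mathbf B$ on $\mathbb{R}^3$ with $\det\mathbf B=1$, and for $\mathbf C^{(1)},\mathbf C^{(2)}\in M$ define $\mathrm{Dist}(\mathbf C^{(1)},\mathbf C^{(2)}):=\sqrt{\rho_{\mathrm R}\psi_{\mathrm{el}}\big(\mathbf C^{(1)}(\mathbf C^{(2)})^{-1}\big)}$. Then: (i) for every second-rank tensor $\mathbf F_0$ with $\det\mathbf F_0=1$ and all $\mathbf C^{(1)},\mathbf C^{(2)}\in M$, $\mathrm{Dist}\big(\mathbf F_0^{-\mathrm T}\mathbf C^{(1)}\mathbf F_0^{-1},\mathbf F_0^{-\mathrm T}\mathbf C^{(2)}\mathbf F_0^{-1}\big)=\mathrm{Dist}(\mathbf C^{(1)},\mathbf C^{(2)})$; (ii) for all $\mathbf C^{(1)},\mathbf C^{(2)}\in M$ one has $\mathrm{Dist}(\mathbf C^{(1)},\mathbf C^{(2)})\ge 0$, and $\mathrm{Dist}(\mathbf C^{(1)},\mathbf C^{(2)})=0$ if and only if $\mathbf C^{(1)}=\mathbf C^{(2)}$.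
   Context: $\mathbf A^{-\mathrm T}$ denotes the inverse of the transpose. $\rho_{\mathrm R}\psi_{\mathrm{el}}$ is the (generalized Neo-Hooke) free energy density written as a single function; $\rho_{\mathrm R}>0$ is a constant mass density. *)

(* Defs.v *)
From HB Require Import structures.
From mathcomp Require Import all_boot all_order all_algebra.
From mathcomp Require Import all_classical all_reals all_analysis.
Set Implicit Arguments. Unset Strict Implicit. Unset Printing Implicit Defensive.
Import Order.TTheory GRing.Theory Num.Theory.
Local Open Scope ring_scope.

Definition psi_el (R : realType) (k mu : R) (A : 'M[R]_3) : R :=
  k / 2 * (ln (Num.sqrt (\det A))) ^+ 2
  + mu / 2 * (\tr (powR (\det A) (- (3%:R^-1)) *: A) - 3%:R).

Definition spd (R : realType) (B : 'M[R]_3) : Prop :=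
  B^T = B /\ (forall v : 'rV[R]_3, v != 0 -> 0 < (v *m B *m v^T) 0 0).

Definition inM (R : realType) (B : 'M[R]_3) : Prop := spd B /\ \det B = 1.

Definition Dist (R : realType) (k mu : R) (C1 C2 : 'M[R]_3) : R :=
  Num.sqrt (psi_el k mu (C1 *m invmx C2)).

(* Main.v *)
Require Import Defs.
From HB Require Import structures.
From mathcomp Require Import all_boot all_order all_algebra.
From mathcomp Require Import all_classical all_reals all_analysis.
From mathcomp Require Import ring lra.
Import Order.TTheory GRing.Theory Num.Theory.
Local Open Scope ring_scope.
Set Implicit Arguments. Unset Strict Implicit.

Definition i0 : 'I_3 := @Ordinal 3 0 isT.
Definition i1 : 'I_3 := @Ordinal 3 1 isT.
Definition i2 : 'I_3 := @Ordinal 3 2 isT.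

Lemma ord3 (i : 'I_3) : i = i0 \/ i = i1 \/ i = i2.
Proof.
case: i => [[|[|[|i]]] Hi]; [left|right;left|right;right|]; try exact: val_inj.
by [].
Qed.

Lemma sum3 (R : nmodType) (F : 'I_3 -> R) : \sum_(i < 3) F i = F i0 + F i1 + F i2.
Proof.
rewrite !big_ord_recr big_ord0 /= add0r.
by congr (_ + _ + _); congr F; apply: val_inj.
Qed.

Lemma mx3P (T : Type) (A B : 'M[T]_3) :
  A i0 i0 = B i0 i0 -> A i0 i1 = B i0 i1 -> A i0 i2 = B i0 i2 ->
  A i1 i0 = B i1 i0 -> A i1 i1 = B i1 i1 -> A i1 i2 = B i1 i2 ->
  A i2 i0 = B i2 i0 -> A i2 i1 = B i2 i1 -> A i2 i2 = B i2 i2 -> A = B.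
Proof.
move=> *; apply/matrixP => i j.
by case: (ord3 i) => [->|[->|->]]; case: (ord3 j) => [->|[->|->]].
Qed.

Definition vec3 {R : nmodType} (x y z : R) : 'rV[R]_3 := \row_(j < 3) [:: x; y; z]`_j.

Lemma qform3 (R : comPzRingType) (S : 'M[R]_3) x y z :
  (vec3 x y z *m S *m (vec3 x y z)^T) 0 0 =
  x * S i0 i0 * x + x * S i0 i1 * y + x * S i0 i2 * z
  + (y * S i1 i0 * x + y * S i1 i1 * y + y * S i1 i2 * z)
  + (z * S i2 i0 * x + z * S i2 i1 * y + z * S i2 i2 * z).
Proof.
rewrite !mxE sum3 !mxE !sum3 !mxE /=.
ring.
Qed.

Lemma prod3 (R : comPzRingType) (F : 'I_3 -> R) : \prod_(i < 3) F i = F i0 * F i1 * F i2.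
Proof.
rewrite !big_ord_recr big_ord0 /= mul1r.
by congr (_ * _ * _); congr F; apply: val_inj.
Qed.

Lemma symE (R : realType) (C : 'M[R]_3) i j : C^T = C -> C j i = C i j.
Proof. by move=> H; rewrite -[in RHS]H mxE. Qed.
Arguments symE {R C} i j.

Lemma vec3_neq0 (R : realType) (x y z : R) : (x != 0) || (y != 0) || (z != 0) ->
  vec3 x y z != 0.
Proof.
move=> H; apply/eqP => /matrixP E; move: H.
move: (E 0 i0) (E 0 i1) (E 0 i2); rewrite !mxE /= => -> -> ->.
by rewrite eqxx.
Qed.

Lemma pd_val (R : realType) (C : 'M[R]_3) x y z : spd C ->
  (x != 0) || (y != 0) || (z != 0) -> 0 < (vec3 x y z *m C *m (vec3 x y z)^T) 0 0.
Proof. by move=> [_ H] nz; apply: H; apply: vec3_neq0. Qed.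

Lemma pd_a (R : realType) (C : 'M[R]_3) : spd C -> 0 < C i0 i0.
Proof.
move=> H; have := @pd_val _ _ 1 0 0 H; rewrite qform3 oner_eq0 /= => /(_ isT).
by rewrite !(mulr0, mul0r, addr0, add0r, mulr1, mul1r).
Qed.

Lemma pd_m (R : realType) (C : 'M[R]_3) : spd C ->
  0 < C i0 i0 * C i1 i1 - C i0 i1 ^+ 2.
Proof.
move=> H; have ha := pd_a H.
have := @pd_val _ _ (- C i0 i1) (C i0 i0) 0 H.
rewrite qform3 (gt_eqF ha) orbT /= => /(_ isT).
rewrite (symE i0 i1 H.1) => h.
have : 0 < C i0 i0 * (C i0 i0 * C i1 i1 - C i0 i1 ^+ 2).
  by apply: (lt_le_trans h); rewrite le_eqVlt; apply/orP; left; apply/eqP; ring.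
by rewrite pmulr_rgt0.
Qed.

Lemma pd_m2 (R : realType) (C : 'M[R]_3) : spd C ->
  0 < C i0 i0 * C i2 i2 - C i0 i2 ^+ 2.
Proof.
move=> H; have ha := pd_a H.
have := @pd_val _ _ (- C i0 i2) 0 (C i0 i0) H.
rewrite qform3 (gt_eqF ha) orbT /= => /(_ isT).
rewrite (symE i0 i2 H.1) => h.
have : 0 < C i0 i0 * (C i0 i0 * C i2 i2 - C i0 i2 ^+ 2).
  by apply: (lt_le_trans h); rewrite le_eqVlt; apply/orP; left; apply/eqP; ring.
by rewrite pmulr_rgt0.
Qed.

Definition Wm (R : realType) (C : 'M[R]_3) : 'M[R]_3 :=
  \matrix_(i, j) nth 0 (nth [::]
   [:: [:: 1; - (C i0 i1 / C i0 i0);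
         (C i0 i1 * C i1 i2 - C i1 i1 * C i0 i2) / (C i0 i0 * C i1 i1 - C i0 i1 ^+ 2)];
       [:: 0; 1; (C i0 i1 * C i0 i2 - C i0 i0 * C i1 i2) / (C i0 i0 * C i1 i1 - C i0 i1 ^+ 2)];
       [:: 0; 0; 1]] i) j.

Definition del3 (R : realType) (C : 'M[R]_3) : R :=
  C i2 i2 + (C i0 i2 * (C i0 i1 * C i1 i2 - C i1 i1 * C i0 i2)
    + C i1 i2 * (C i0 i1 * C i0 i2 - C i0 i0 * C i1 i2)) / (C i0 i0 * C i1 i1 - C i0 i1 ^+ 2).

Definition del (R : realType) (C : 'M[R]_3) : 'rV[R]_3 :=
  vec3 (C i0 i0) ((C i0 i0 * C i1 i1 - C i0 i1 ^+ 2) / C i0 i0) (del3 C).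

Lemma decomp (R : realType) (C : 'M[R]_3) : C^T = C -> C i0 i0 != 0 ->
  C i0 i0 * C i1 i1 - C i0 i1 ^+ 2 != 0 ->
  (Wm C)^T *m C *m Wm C = diag_mx (del C).
Proof.
move=> S ha hm.
apply: mx3P; rewrite /del /del3 !mxE !sum3 !mxE !sum3 !mxE /=;
  rewrite (symE i0 i1 S) (symE i0 i2 S) (symE i1 i2 S); field; rewrite ?ha ?hm //.
Qed.

Lemma detW (R : realType) (C : 'M[R]_3) : \det (Wm C) = 1.
Proof.
rewrite -det_tr det_trig; last first.
  apply/is_trig_mxP => i j.
  by case: (ord3 i) => [->|[->|->]]; case: (ord3 j) => [->|[->|->]]; rewrite !mxE.
by rewrite prod3 !mxE /= !mul1r.
Qed.

Lemma detC (R : realType) (C : 'M[R]_3) : C^T = C -> C i0 i0 != 0 ->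
  C i0 i0 * C i1 i1 - C i0 i1 ^+ 2 != 0 ->
  \det C = C i0 i0 * C i1 i1 * C i2 i2 + 2 * C i0 i1 * C i0 i2 * C i1 i2
     - C i0 i0 * C i1 i2 ^+ 2 - C i1 i1 * C i0 i2 ^+ 2 - C i2 i2 * C i0 i1 ^+ 2.
Proof.
move=> S ha hm.
have := congr1 determinant (decomp S ha hm).
rewrite !det_mulmx det_tr detW det_diag prod3 /del /del3 !mxE /= mul1r mulr1 => ->.
field; rewrite ?ha ?hm //.
Qed.
Lemma arith (R : realFieldType) (a b c d e f : R) :
  0 < a -> 0 < a * b - d ^+ 2 -> 0 < a * c - e ^+ 2 ->
  a * b * c + 2 * d * e * f - a * f ^+ 2 - b * e ^+ 2 - c * d ^+ 2 = 1 ->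
  a + b + c <= 3%:R ->
  a = 1 /\ b = 1 /\ c = 1 /\ d = 0 /\ e = 0 /\ f = 0.
Proof.
move=> ha hm hm2 hdet htr.
have key : a = (a*b - d^+2) * (a*c - e^+2) - (a*f - d*e)^+2.
  by rewrite -[X in X = _]mulr1 -hdet; ring.
have sd := sqr_ge0 d; have se := sqr_ge0 e; have sf := sqr_ge0 f.
have hb : 0 < b by nra.
have hc : 0 < c by nra.
have habc : 1 <= a * b * c.
  have hq := sqr_ge0 (a*f - d*e).
  have h1 : a <= (a*b - d^+2) * (a*c - e^+2) by lra.
  have h2a : d ^+ 2 * e ^+ 2 <= a * b * e ^+ 2 by nra.
  have h2b : 0 <= a * c * d ^+ 2 by nra.
  have h2 : (a*b - d^+2) * (a*c - e^+2) <= a * (a * (b * c)).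
    have -> : (a*b - d^+2) * (a*c - e^+2) = a * (a * (b * c)) - (a * b * e ^+ 2 - d ^+ 2 * e ^+ 2) - a * c * d ^+ 2 by ring.
    lra.
  nra.
have sq2 : forall x y z : R, 0 < x -> 0 < y -> x + y + z <= 3%:R -> 4 * (x * y) <= (3 - z) ^+ 2.
  move=> x y z hx hy hs.
  have h1 := sqr_ge0 (x - y).
  have h2 : 0 <= (3 - z - (x + y)) * (3 - z + (x + y)) by apply: mulr_ge0; lra.
  nra.
have hbc : 4 * (b * c) <= (3 - a) ^+ 2 by apply: sq2 => //; lra.
have hca : 4 * (c * a) <= (3 - b) ^+ 2 by apply: sq2 => //; lra.
have hab : 4 * (a * b) <= (3 - c) ^+ 2 by apply: sq2 => //; lra.
have one : forall x : R, 0 < x -> x < 4 -> 4 <= x * (3 - x) ^+ 2 -> x = 1.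
  move=> x hx hx4 h.
  have h' : 0 <= (x - 1) ^+ 2 * (x - 4) by nra.
  have h2 : (x - 1) ^+ 2 <= 0.
    rewrite leNgt; apply/negP => hp.
    have : 0 < (x - 1) ^+ 2 * (4 - x) by apply: mulr_gt0; lra.
    lra.
  have h3 : (x - 1) ^+ 2 = 0 by apply/eqP; rewrite eq_le h2 sqr_ge0.
  by apply/eqP; rewrite -subr_eq0 -sqrf_eq0 h3.
have a1 : a = 1.
  have h : 4 <= a * (3 - a) ^+ 2 by nra.
  apply: one => //; lra.
have b1 : b = 1.
  have h : 4 <= b * (3 - b) ^+ 2 by nra.
  apply: one => //; lra.
have c1 : c = 1.
  have h : 4 <= c * (3 - c) ^+ 2 by nra.
  apply: one => //; lra.
rewrite a1 b1 c1 in key hm hm2.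
have hd2 : d ^+ 2 < 1 by nra.
have he2 : e ^+ 2 < 1 by nra.
have hde : d ^+ 2 * e ^+ 2 <= e ^+ 2 by nra.
have h0 : d ^+ 2 * (1 - e ^+ 2) + e ^+ 2 + (f - d * e) ^+ 2 = 0 by nra.
have t1 : 0 <= d ^+ 2 * (1 - e ^+ 2) by apply: mulr_ge0; lra.
have t2 := sqr_ge0 (f - d * e).
have z2 : forall x : R, 0 <= x ^+ 2 -> x ^+ 2 <= 0 -> x = 0.
  by move=> x h1 h2; apply/eqP; rewrite -sqrf_eq0 eq_le h1 h2.
have e0 : e = 0 by apply: z2 => //; lra.
rewrite e0 in h0 t1; rewrite expr0n /= in h0 t1; rewrite ?(subr0, mulr1, mul0r, mulr0, addr0, add0r) in h0 t1.
have d0 : d = 0 by apply: z2 => //; lra.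
rewrite d0 expr0n /= in h0; rewrite ?(subr0, mulr1, mul0r, mulr0, addr0, add0r) in h0.
have f0 : f = 0 by apply: z2 => //; lra.
by [] || tauto.
Qed.

Lemma Hlem (R : realType) (S : 'M[R]_3) : spd S -> \det S = 1 -> \tr S <= 3%:R -> S = 1%:M.
Proof.
move=> hS hdet htr.
have ha := pd_a hS; have hm := pd_m hS; have hm2 := pd_m2 hS.
have sS := hS.1.
move: hdet; rewrite (detC sS (lt0r_neq0 ha) (lt0r_neq0 hm)) => hdet.
move: htr; rewrite /mxtrace sum3 => htr.
have [a1 [b1 [c1 [d0 [e0 f0]]]]] := arith ha hm hm2 hdet htr.
have E10 := symE i0 i1 sS; have E20 := symE i0 i2 sS; have E21 := symE i1 i2 sS.
by apply: mx3P; rewrite !mxE /= ?E10 ?E20 ?E21 ?a1 ?b1 ?c1 ?d0 ?e0 ?f0.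
Qed.

Lemma invmx_uniq (R : realType) (A B : 'M[R]_3) : A *m B = 1%:M -> invmx A = B.
Proof.
move=> h; have [uA _] := mulmx1_unit h.
by rewrite -[RHS](mulKmx uA) h mulmx1.
Qed.

Lemma sqinv (R : realType) (x : R) : 0 < x -> (Num.sqrt x)^-1 * x * (Num.sqrt x)^-1 = 1.
Proof.
move=> hx; have hs : Num.sqrt x != 0 by rewrite lt0r_neq0 // sqrtr_gt0.
rewrite -{2}(sqr_sqrtr (ltW hx)); field; exact: hs.
Qed.

Lemma key (R : realType) (C1 C2 : 'M[R]_3) : inM C1 -> inM C2 ->
  \tr (C1 *m invmx C2) <= 3%:R -> C1 = C2.
Proof.
move=> [h1 d1] [h2 d2] htr.
have sC := h2.1.
have ha := pd_a h2; have hm := pd_m h2.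
have hdec := decomp sC (lt0r_neq0 ha) (lt0r_neq0 hm).
set dl := del C2 in hdec.
have hd1 : 0 < dl 0 i0 by rewrite /dl /del mxE.
have hd2 : 0 < dl 0 i1 by rewrite /dl /del mxE /=; apply: divr_gt0.
have hd3 : 0 < dl 0 i2.
  have := congr1 determinant hdec.
  rewrite !det_mulmx det_tr detW d2 det_diag prod3 mul1r mulr1 => h.
  have : 0 < dl 0 i0 * dl 0 i1 * dl 0 i2 by rewrite -h ltr01.
  by rewrite pmulr_rgt0 // mulr_gt0.
set s := vec3 (Num.sqrt (dl 0 i0))^-1 (Num.sqrt (dl 0 i1))^-1 (Num.sqrt (dl 0 i2))^-1.
set P := Wm C2 *m diag_mx s.
have hd2' : 0 < (C2 i0 i0 * C2 i1 i1 - C2 i0 i1 ^+ 2) / C2 i0 i0.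
  by move: hd2; rewrite /dl /del mxE.
have hd3' : 0 < del3 C2 by move: hd3; rewrite /dl /del mxE.
have hP : P^T *m C2 *m P = 1%:M.
  rewrite /P trmx_mul tr_diag_mx.
  have -> : diag_mx s *m (Wm C2)^T *m C2 *m (Wm C2 *m diag_mx s) =
            diag_mx s *m ((Wm C2)^T *m C2 *m Wm C2) *m diag_mx s by rewrite !mulmxA.
  rewrite hdec.
  apply: mx3P; rewrite /s !mxE !sum3 !mxE !sum3 !mxE /= ?mulr0n ?mulr1n
    ?(mulr0, mul0r, addr0, add0r) //;
    apply: sqinv; first [exact: ha | exact: hd2' | exact: hd3'].
have uP : P \in unitmx.
  rewrite unitmxE unitfE det_mulmx detW det_diag prod3 /s !mxE /= mul1r.
  by rewrite lt0r_neq0 // !mulr_gt0 // invr_gt0 sqrtr_gt0.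
clearbody P.
have uPt : P^T \in unitmx by rewrite unitmx_tr.
have hinv : invmx C2 = P *m P^T.
  apply: invmx_uniq.
  have e1 : C2 *m P = invmx P^T.
    by rewrite -[LHS](mulKmx uPt) (mulmxA P^T C2 P) hP mulmx1.
  by rewrite mulmxA e1 mulVmx.
move: htr; rewrite hinv mulmxA mxtrace_mulC !mulmxA => htr.
have hS : spd (P^T *m C1 *m P).
  split.
    by rewrite !trmx_mul trmxK h1.1 !mulmxA.
  move=> v hv.
  have hv' : v *m P^T != 0.
    apply/eqP => hz; move/eqP: hv; apply.
    by rewrite -(mulmxK uPt v) hz mul0mx.
  have := h1.2 _ hv'.
  by rewrite trmx_mul trmxK !mulmxA.
have hdS : \det (P^T *m C1 *m P) = 1.
  have := congr1 determinant hP; rewrite !det_mulmx det1 d2 mulr1 => hp.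
  by rewrite d1 mulr1 hp.
have e := Hlem hS hdS htr.
have ee : forall C, P^T *m C *m P = 1%:M -> C = invmx P^T *m invmx P.
  move=> C hC.
  have -> : invmx P^T *m invmx P = invmx P^T *m (P^T *m C *m P) *m invmx P
    by rewrite hC mulmx1.
  by rewrite !mulmxA mulmxK // mulVmx // mul1mx.
by rewrite (ee _ e) (ee _ hP).
Qed.

Lemma psi_det1 (R : realType) (k mu : R) (X : 'M[R]_3) : \det X = 1 ->
  psi_el k mu X = mu / 2 * (\tr X - 3%:R).
Proof.
move=> hX; rewrite /psi_el hX sqrtr1 ln1 powR1 /= scale1r expr2 !mulr0 add0r.
by [].
Qed.

Lemma psi_eq (R : realType) (k mu : R) (A B : 'M[R]_3) :
  \det A = \det B -> \tr A = \tr B -> psi_el k mu A = psi_el k mu B.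
Proof. by move=> hd ht; rewrite /psi_el !mxtraceZ hd ht. Qed.

Theorem mainTheorem2 (R : realType) (k mu : R) (hk : 0 < k) (hmu : 0 < mu) :
  (forall (F0 C1 C2 : 'M[R]_3), \det F0 = 1 -> inM C1 -> inM C2 ->
     Dist k mu ((invmx F0)^T *m C1 *m invmx F0) ((invmx F0)^T *m C2 *m invmx F0)
     = Dist k mu C1 C2)
  /\
  (forall (C1 C2 : 'M[R]_3), inM C1 -> inM C2 ->
     0 <= Dist k mu C1 C2 /\ (Dist k mu C1 C2 = 0 <-> C1 = C2)).
Proof.
split.
  move=> F C1 C2 dF [h1 d1] [h2 d2].
  have uF : F \in unitmx by rewrite unitmxE dF unitr1.
  have uC2 : C2 \in unitmx by rewrite unitmxE d2 unitr1.
  set G := invmx F.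
  have GF : G *m F = 1%:M by rewrite /G mulVmx.
  have dG : \det G = 1 by rewrite /G det_inv dF invr1.
  have hinv : invmx (G^T *m C2 *m G) = F *m invmx C2 *m F^T.
    apply: invmx_uniq.
    rewrite !mulmxA -(mulmxA (G^T *m C2) G F) GF mulmx1.
    rewrite -(mulmxA G^T C2 (invmx C2)) (mulmxV uC2) mulmx1.
    by rewrite -trmx_mul /G (mulmxV uF) trmx1.
  rewrite /Dist hinv; congr Num.sqrt; apply: psi_eq.
    by rewrite !det_mulmx !det_tr dG dF !mul1r !mulr1.
  rewrite !mulmxA -(mulmxA (G^T *m C1) G F) GF mulmx1.
  by rewrite mxtrace_mulC !mulmxA -trmx_mul GF trmx1 mul1mx.
move=> C1 C2 hC1 hC2.
have uC1 : C1 \in unitmx by rewrite unitmxE hC1.2 unitr1.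
have uC2 : C2 \in unitmx by rewrite unitmxE hC2.2 unitr1.
split; first exact: sqrtr_ge0.
have dX : \det (C1 *m invmx C2) = 1.
  by rewrite det_mulmx det_inv hC1.2 hC2.2 invr1 mulr1.
split.
  rewrite /Dist => /eqP; rewrite sqrtr_eq0 (psi_det1 _ _ dX) => h.
  apply: key => //.
  have hm2 : 0 < mu / 2 by apply: divr_gt0.
  by move: h; rewrite pmulr_rle0 // subr_le0.
move=> E; rewrite -E /Dist (mulmxV uC1) psi_det1 ?det1 // mxtrace1 subrr mulr0.
exact: sqrtr0.
Qed.
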